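(* Under the saturation assumption below, each of the quantities $A_1=\sum_{\mathcal I\in\overline{\mathbb I}^*}\overline E_{\mathcal I}$, $A_2=1+\sum_{\mathcal I\in\mathbb I}T_{\mathcal I}$, $B_1=\sum_{\mathcal I\in\mathbb I^*}E_{\mathcal I}$, $B_2=1+\sum_{\mathcal I\in\overline{\mathbb I}}\overline T_{\mathcal I}$, $C_1=\sum_{\mathcal I\in\mathbb I^{-*}}E_{\mathcal I}$ (viewed as functions of $\delta\in(0,\bar\delta]$) can be written as $P(\delta)/D(\delta)$, where $P$ and $D$ are polynomials in $\delta$, $D$ is a finite product of factors of the form $|\alpha_{\mathcal E(\mathcal I)}|-|\alpha_{\mathcal I}|$ ($\mathcal I\in\mathbb I$) or $|\alpha_{\overline{\mathcal E}(\mathcal I)}|-|\alpha_{\mathcal I}|$ ($\mathcal I\in\overline{\mathbb I}$), and the constant term of $P$ is positive, i.e. $P(0)>0$.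
   Context: A matching model: finite connected simple graph $\mathcal G=(\mathcal V,\xi)$, $\mathcal V=\{1,\dots,n\}$, arrival distribution $\alpha$ on $\mathcal V$; FCFS policy (an arriving item of class $i$ is matched with the oldest present item whose class is a neighbour of $i$, otherwise it waits). $\mathcal E(i)$ is the neighbour set of $i$ in $\mathcal G$, $\mathcal E(V)=\bigcup_{i\in V}\mathcal E(i)$, $|\alpha_V|=\sum_{i\in V}\alpha_i$. An independent set is a non-empty set of pairwise non-adjacent nodes; $\mathbb I$ is the set of independent sets of $\mathcal G$. Fix distinct non-adjacent nodes $i^*,j^*$; $\overline{\mathcal G}$ is $\mathcal G$ with edge $\{i^*,j^*\}$ added, with neighbourhood map $\overline{\mathcal E}$ and set of independent sets $\overline{\mathbb I}$. $\mathbb I^*=\{\mathcal I\in\mathbb I: i^*\in\mathcal I\text{ or }j^*\in\mathcal I\}$, $\mathbb I^{-*}=\mathbb I\setminus\mathbb I^*$, $\overline{\mathbb I}^*=\{\mathcal I\in\overline{\mathbb I}: i^*\in\mathcal I\text{ or }j^*\in\mathcal I\}$. For $\mathcal I\in\mathbb I$ and an ordering $(i_1,\dots,i_m)$ of $\mathcal I$, with $\mathcal I_k=\{i_1,\dots,i_k\}$, set $T_{(i_1,\dots,i_m)}=\prod_{k=1}^m\frac{\alpha_{i_k}}{|\alpha_{\mathcal E(\mathcal I_k)}|-|\alpha_{\mathcal I_k}|}$ and $E_{(i_1,\dots,i_m)}=\sum_{l=1}^m\frac{|\alpha_{\mathcal E(\mathcal I_l)}|}{|\alpha_{\mathcal E(\mathcal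 I_l)}|-|\alpha_{\mathcal I_l}|}T_{(i_1,\dots,i_m)}$; $T_{\mathcal I}$, $E_{\mathcal I}$ are the sums over all orderings of $\mathcal I$. $\overline T_{\mathcal I},\overline E_{\mathcal I}$ ($\mathcal I\in\overline{\mathbb I}$) are defined identically with $\mathcal E$ replaced by $\overline{\mathcal E}$. Saturation assumption: $\alpha_i=a_i+b_i\delta$ with constants $a_i>0$, $b_i\in\mathbb R$, such that for all $\delta\in(0,\bar\delta]$ (some $\bar\delta>0$) $\alpha$ is a probability distribution satisfying the stability condition $|\alpha_{\mathcal I}|<|\alpha_{\mathcal E(\mathcal I)}|$ for all $\mathcal I\in\mathbb I$; moreover $\sum_{i\in\mathcal E(\hat{\mathcal I})}a_i-\sum_{i\in\hat{\mathcal I}}a_i=0$ for exactly one independent set $\hat{\mathcal I}\in\mathbb I$ (called saturated). *)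

(* Defs.v *)
From HB Require Import structures.
From mathcomp Require Import all_boot all_order all_algebra.
From mathcomp Require Import reals.
Set Implicit Arguments. Unset Strict Implicit. Unset Printing Implicit Defensive.
Import Order.TTheory GRing.Theory Num.Theory.
Local Open Scope ring_scope.

Section MatchingDefs.
Variables (R : realType) (n : nat).

Definition nbr (e : rel 'I_n) (V : {set 'I_n}) : {set 'I_n} :=
  [set j | [exists i in V, e i j]].

Definition wt (alpha : 'I_n -> R) (V : {set 'I_n}) : R := \sum_(i in V) alpha i.

Definition gap (e : rel 'I_n) (alpha : 'I_n -> R) (V : {set 'I_n}) : R :=
  wt alpha (nbr e V) - wt alpha V.

Definition indep (e : rel 'I_n) (I : {set 'I_n}) : bool :=
  (I != set0) && [forall i in I, forall j in I, ~~ e i j].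

Definition prefset (s : seq 'I_n) (k : nat) : {set 'I_n} := [set x in take k s].

Definition Tord (e : rel 'I_n) (alpha : 'I_n -> R) (s : seq 'I_n) : R :=
  \prod_(k < size s) (nth 0 (map alpha s) k / gap e alpha (prefset s k.+1)).

Definition Eord (e : rel 'I_n) (alpha : 'I_n -> R) (s : seq 'I_n) : R :=
  (\sum_(l < size s)
     wt alpha (nbr e (prefset s l.+1)) / gap e alpha (prefset s l.+1))
  * Tord e alpha s.

Definition Tset (e : rel 'I_n) (alpha : 'I_n -> R) (I : {set 'I_n}) : R :=
  \sum_(s <- permutations (enum I)) Tord e alpha s.
Definition Eset (e : rel 'I_n) (alpha : 'I_n -> R) (I : {set 'I_n}) : R :=
  \sum_(s <- permutations (enum I)) Eord e alpha s.

Definition addedge (e : rel 'I_n) (istar jstar : 'I_n) : rel 'I_n :=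
  fun i j => [|| e i j, (i == istar) && (j == jstar) | (i == jstar) && (j == istar)].

Definition alphad (a b : 'I_n -> R) (d : R) : 'I_n -> R := fun i => a i + b i * d.

Definition alphaP (a b : 'I_n -> R) (i : 'I_n) : {poly R} := (a i)%:P + (b i)%:P * 'X.

Definition gapP (e : rel 'I_n) (a b : 'I_n -> R) (I : {set 'I_n}) : {poly R} :=
  \sum_(i in nbr e I) alphaP a b i - \sum_(i in I) alphaP a b i.

(* Q (function of delta on (0, dbar]) is P(delta)/D(delta), with P, D polynomials,
   D a finite product of factors |alpha_{E(I)}|-|alpha_I| (I in II) or
   |alpha_{Ebar(I)}|-|alpha_I| (I in IIbar), and P(0) > 0.
   In a pair (I, c) of the list, c = true means a factor for G, c = false for Gbar. *)
Definition ratform (e ebar : rel 'I_n) (a b : 'I_n -> R) (dbar : R) (Q : R -> R) : Prop :=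
  exists (P : {poly R}) (l : seq ({set 'I_n} * bool)),
    (forall p, p \in l -> indep (if p.2 then e else ebar) p.1) /\
    (forall d, 0 < d <= dbar ->
       Q d = P.[d] / (\prod_(p <- l) gapP (if p.2 then e else ebar) a b p.1).[d]) /\
    0 < P.[0].

End MatchingDefs.

(* Main.v *)
Require Import Defs.
From HB Require Import structures.
From mathcomp Require Import all_boot all_order all_algebra.
From mathcomp Require Import reals.
From mathcomp Require Import ring lra.
Import Order.TTheory GRing.Theory Num.Theory.
Local Open Scope ring_scope.

Section Rf.
Variables (R : realType) (n : nat) (e ebar : rel 'I_n) (a b : 'I_n -> R) (dbar : R).
Hypothesis dbar_gt0 : 0 < dbar.

Definition gpp (p : {set 'I_n} * bool) := gapP (if p.2 then e else ebar) a b p.1.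

Definition okp (g : {poly R}) := exists c0 c1, g = c0%:P + c1%:P * 'X /\ 0 <= c0 /\
   (forall d, 0 < d <= dbar -> 0 < g.[d]).

Hypothesis Hok : forall p, indep (if p.2 then e else ebar) p.1 -> okp (gpp p).

Lemma okp_pos0 g : okp g -> 0 <= g.[0].
Proof.
case=> c0 [c1 [-> [h0 _]]].
by rewrite hornerD hornerCM hornerX hornerC mulr0 addr0.
Qed.

Lemma okp_pos g d : okp g -> 0 < d <= dbar -> 0 < g.[d].
Proof. by case=> c0 [c1 [_ [_ h]]]; apply: h. Qed.

Lemma okp_zero g : okp g -> g.[0] = 0 -> g = (g.[1])%:P * 'X /\ 0 < g.[1].
Proof.
case=> c0 [c1 [E [h0 h]]].
have := h dbar; rewrite dbar_gt0 lexx => /(_ isT).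
rewrite E !(hornerD, hornerCM, hornerX, hornerC) mulr0 addr0 mulr1 => hd h0'.
move: hd; rewrite h0' !add0r => hd; split => //.
have : 0 < c1 * dbar by lra.
by rewrite pmulr_lgt0.
Qed.

Notation rf := (ratform e ebar a b dbar).

Lemma rf_ext Q1 Q2 : (forall d, 0 < d <= dbar -> Q1 d = Q2 d) -> rf Q1 -> rf Q2.
Proof.
move=> H [P [l [h1 [h2 h3]]]]; exists P, l; split => //; split => // d hd.
by rewrite -H // h2.
Qed.

Lemma rf_const c : 0 < c -> rf (fun _ => c).
Proof.
move=> hc; exists c%:P, [::]; split => //; split; last by rewrite hornerC.
by move=> d _; rewrite big_nil hornerC hornerC divr1.
Qed.

Lemma rf_alpha i : 0 < a i -> rf (fun d => alphad a b d i).
Proof.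
move=> hc; exists (alphaP a b i), [::]; split => //; split.
  by move=> d _; rewrite big_nil hornerC divr1 /alphaP /alphad !(hornerD, hornerCM, hornerX, hornerC).
by rewrite /alphaP !(hornerD, hornerCM, hornerX, hornerC) mulr0 addr0.
Qed.

Lemma gapP_eval e' I d : (gapP e' a b I).[d] = gap e' (alphad a b d) I.
Proof.
rewrite /gapP /gap /wt hornerD hornerN !horner_sum; congr (_ - _); apply: eq_bigr => i _;
by rewrite /alphaP /alphad !(hornerD, hornerCM, hornerX, hornerC).
Qed.

Lemma rf_invgap p : indep (if p.2 then e else ebar) p.1 ->
  rf (fun d => (gap (if p.2 then e else ebar) (alphad a b d) p.1)^-1).
Proof.
move=> hp; exists 1, [:: p]; split; first by move=> q; rewrite inE => /eqP ->.
split; last by rewrite hornerC.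
by move=> d _; rewrite big_cons big_nil mulr1 hornerC div1r gapP_eval.
Qed.

Lemma rf_mul Q1 Q2 : rf Q1 -> rf Q2 -> rf (fun d => Q1 d * Q2 d).
Proof.
move=> [P1 [l1 [h1 [h2 h3]]]] [P2 [l2 [g1 [g2 g3]]]].
exists (P1 * P2), (l1 ++ l2); split.
  by move=> p; rewrite mem_cat => /orP [/h1|/g1].
split; last by rewrite hornerM mulr_gt0.
by move=> d hd; rewrite h2 // g2 // big_cat /= !hornerM mulf_div.
Qed.


Definition zf (l : seq ({set 'I_n} * bool)) := [seq p <- l | (gpp p).[0] == 0].
Definition nf (l : seq ({set 'I_n} * bool)) := [seq p <- l | (gpp p).[0] != 0].

Lemma prod_zero (z : seq ({set 'I_n} * bool)) :
  (forall p, p \in z -> gpp p = ((gpp p).[1])%:P * 'X) ->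
  \prod_(p <- z) gpp p = (\prod_(p <- z) (gpp p).[1])%:P * 'X^(size z).
Proof.
elim: z => [|p z IH] H; first by rewrite !big_nil expr0 mulr1.
rewrite !big_cons IH; last by move=> q qz; apply: H; rewrite inE qz orbT.
rewrite {1}H ?mem_head // polyCM exprS /=.
by rewrite -!mulrA; congr (_ * _); rewrite mulrCA.
Qed.

Lemma split_prod l : (forall p, p \in l -> indep (if p.2 then e else ebar) p.1) ->
  [/\ \prod_(p <- l) gpp p = (\prod_(p <- zf l) (gpp p).[1])%:P * 'X^(size (zf l)) *
        \prod_(p <- nf l) gpp p,
      0 < \prod_(p <- zf l) (gpp p).[1],
      0 < (\prod_(p <- nf l) gpp p).[0] &
      forall d, 0 < d <= dbar -> 0 < (\prod_(p <- nf l) gpp p).[d]].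
Proof.
move=> hl.
have okl p : p \in l -> okp (gpp p) by move=> /hl /Hok.
split.
- have -> : \prod_(p <- l) gpp p = \prod_(p <- zf l) gpp p * \prod_(p <- nf l) gpp p.
    by rewrite /zf /nf !big_filter (bigID (fun p => (gpp p).[0] == 0)).
  rewrite prod_zero //.
  move=> p; rewrite mem_filter => /andP [/eqP h0 pl].
  by case: (@okp_zero _ (okl p pl) h0).
- rewrite big_seq; apply: prodr_gt0 => p; rewrite mem_filter => /andP [/eqP h0 pl].
  by case: (@okp_zero _ (okl p pl) h0).
- rewrite horner_prod big_seq; apply: prodr_gt0 => p; rewrite mem_filter => /andP [h0 pl].
  by rewrite lt_def h0 (@okp_pos0 _ (okl p pl)).
- move=> d hd; rewrite horner_prod big_seq; apply: prodr_gt0 => p.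
  rewrite mem_filter => /andP [h0 pl].
  exact: (@okp_pos _ _ (okl p pl) hd).
Qed.

Lemma rf_add_key Q1 Q2 P1 l1 P2 l2 :
  (forall p, p \in l1 -> indep (if p.2 then e else ebar) p.1) ->
  (forall d, 0 < d <= dbar -> Q1 d = P1.[d] / (\prod_(p <- l1) gpp p).[d]) ->
  0 < P1.[0] ->
  (forall p, p \in l2 -> indep (if p.2 then e else ebar) p.1) ->
  (forall d, 0 < d <= dbar -> Q2 d = P2.[d] / (\prod_(p <- l2) gpp p).[d]) ->
  0 < P2.[0] ->
  (size (zf l2) <= size (zf l1))%N ->
  rf (fun d => Q1 d + Q2 d).
Proof.
move=> h1 h2 h3 g1 g2 g3 hm.
have [E1 C1p D10 D1d] := split_prod l1 h1.
have [E2 C2p D20 D2d] := split_prod l2 g1.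
set C1 := \prod_(p <- zf l1) (gpp p).[1] in E1 C1p.
set C2 := \prod_(p <- zf l2) (gpp p).[1] in E2 C2p.
set D1 := \prod_(p <- nf l1) gpp p in E1 D10 D1d.
set D2 := \prod_(p <- nf l2) gpp p in E2 D20 D2d.
set m1 := size (zf l1) in E1 hm.
set m2 := size (zf l2) in E2 hm.
exists (P1 * D2 + P2 * (C1 / C2)%:P * 'X^(m1 - m2) * D1), (l1 ++ nf l2); split.
  move=> p; rewrite mem_cat => /orP [/h1 //|]; rewrite mem_filter => /andP [_].
  exact: g1.
split; last first.
  rewrite !(hornerD, hornerM, hornerC, hornerXn).
  have A : 0 < P1.[0] * D2.[0] by rewrite mulr_gt0.
  have B : 0 <= P2.[0] * (C1 / C2) * 0 ^+ (m1 - m2) * D1.[0].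
    apply: mulr_ge0; last exact: ltW.
    apply: mulr_ge0; last exact: exprn_ge0.
    apply: mulr_ge0; first exact: ltW.
    by apply: divr_ge0; apply: ltW.
  lra.
move=> d hd.
have dp : 0 < d by case/andP: hd.
rewrite h2 // g2 // big_cat E1 E2 -/D2 !(hornerD, hornerM, hornerC, hornerXn).
have -> : d ^+ m1 = d ^+ (m1 - m2) * d ^+ m2 by rewrite -exprD subnK.
have u0 : d ^+ (m1 - m2) != 0 by rewrite expf_neq0 // gt_eqF.
have v0 : d ^+ m2 != 0 by rewrite expf_neq0 // gt_eqF.
have c10 : C1 != 0 by rewrite gt_eqF.
have c20 : C2 != 0 by rewrite gt_eqF.
have d10 : D1.[d] != 0 by rewrite gt_eqF // D1d.
have d20 : D2.[d] != 0 by rewrite gt_eqF // D2d.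
move: u0 v0 c10 c20 d10 d20.
move: (d ^+ (m1 - m2)) (d ^+ m2) (P1.[d]) (P2.[d]) (D1.[d]) (D2.[d]) => u v x y z w u0 v0 c10 c20 d10 d20.
by field; rewrite u0 v0 c10 c20 d10 d20.
Qed.


Lemma rf_add Q1 Q2 : rf Q1 -> rf Q2 -> rf (fun d => Q1 d + Q2 d).
Proof.
move=> [P1 [l1 [h1 [h2 h3]]]] [P2 [l2 [g1 [g2 g3]]]].
case: (leqP (size (zf l2)) (size (zf l1))) => hm.
  exact: (rf_add_key _ _ _ _ _ _ h1 h2 h3 g1 g2 g3 hm).
apply: (rf_ext (fun d => Q2 d + Q1 d)); first by move=> d _; rewrite addrC.
exact: (rf_add_key _ _ _ _ _ _ g1 g2 g3 h1 h2 h3 (ltnW hm)).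
Qed.

Lemma rf_sum (T : eqType) (r : seq T) (F : T -> R -> R) :
  r != [::] -> (forall i, i \in r -> rf (F i)) -> rf (fun d => \sum_(i <- r) F i d).
Proof.
elim: r => [//|x r IH] _ H.
case: r IH H => [|y r] IH H.
  apply: (rf_ext (F x)); first by move=> d _; rewrite big_cons big_nil addr0.
  exact: (H x (mem_head _ _)).
apply: (rf_ext (fun d => F x d + \sum_(i <- y :: r) F i d)).
  by move=> d _; rewrite [in RHS]big_cons.
apply: rf_add; first by apply: H; rewrite mem_head.
apply: IH => // i ir; apply: H; by rewrite inE ir orbT.
Qed.

Lemma rf_prod (T : eqType) (r : seq T) (F : T -> R -> R) :
  (forall i, i \in r -> rf (F i)) -> rf (fun d => \prod_(i <- r) F i d).
Proof.
elim: r => [|x r IH] H.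
  apply: (rf_ext (fun _ => 1)); first by move=> d _; rewrite big_nil.
  exact: rf_const.
apply: (rf_ext (fun d => F x d * \prod_(i <- r) F i d)).
  by move=> d _; rewrite big_cons.
apply: rf_mul; first by apply: H; rewrite mem_head.
apply: IH => i ir; apply: H; by rewrite inE ir orbT.
Qed.

Lemma rf_sum_fin (T : finType) (P : pred T) (F : T -> R -> R) :
  (exists i, P i) -> (forall i, P i -> rf (F i)) -> rf (fun d => \sum_(i | P i) F i d).
Proof.
move=> [i0 Pi0] H.
apply: (rf_ext (fun d => \sum_(i <- [seq i <- index_enum T | P i]) F i d)).
  by move=> d _; rewrite big_filter.
apply: rf_sum.
  apply/eqP => E; have : i0 \in [seq i <- index_enum T | P i] by rewrite mem_filter Pi0 mem_index_enum.
  by rewrite E.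
by move=> i; rewrite mem_filter => /andP [/H].
Qed.

Lemma rf_prod_fin (T : finType) (F : T -> R -> R) :
  (forall i, rf (F i)) -> rf (fun d => \prod_(i : T) F i d).
Proof.
move=> H; apply: (rf_ext (fun d => \prod_(i <- index_enum T) F i d)).
  by move=> d _.
by apply: rf_prod => i _; apply: H.
Qed.


Hypothesis Hsub : forall i j, e i j -> ebar i j.
Hypothesis Hnb : forall x, exists y, e x y.
Hypothesis Ha : forall i, 0 < a i.
Variable x0 : 'I_n.

Lemma indep_sub (e' : rel 'I_n) (I J : {set 'I_n}) x : indep e' I -> J \subset I -> x \in J -> indep e' J.
Proof.
move=> /andP [_ hI] /subsetP sJ xJ; apply/andP; split.
  by apply/set0Pn; exists x.
apply/forall_inP => i iJ; apply/forall_inP => j jJ.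
by move/forall_inP: hI => /(_ i (sJ i iJ)) /forall_inP /(_ j (sJ j jJ)).
Qed.

Lemma rf_wt (K : {set 'I_n}) : (exists y, y \in K) -> rf (fun d => wt (alphad a b d) K).
Proof.
move=> [y yK].
have := rf_sum_fin _ (fun i => i \in K) (fun i d => alphad a b d i).
move=> /(_ (ex_intro _ y yK) (fun i _ => rf_alpha i (Ha i))).
by apply: rf_ext => d _.
Qed.

Lemma nbr_ne c (J : {set 'I_n}) x : x \in J -> exists y, y \in nbr (if c then e else ebar) J.
Proof.
move=> xJ; have [y hy] := Hnb x; exists y; rewrite inE; apply/existsP; exists x.
by rewrite xJ /=; case: c => //; apply: Hsub.
Qed.

Lemma pref_facts (I : {set 'I_n}) s k : s \in permutations (enum I) -> (k < size s)%N ->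
  prefset s k.+1 \subset I /\ nth x0 s k \in prefset s k.+1.
Proof.
rewrite mem_permutations => hp hk; split.
  apply/subsetP => x; rewrite inE => /mem_take.
  by rewrite (perm_mem hp) mem_enum.
rewrite inE -(nth_take x0 (ltnSn k)); apply: mem_nth; rewrite size_takel //.
Qed.

Lemma rf_Tord c (I : {set 'I_n}) s : indep (if c then e else ebar) I -> s \in permutations (enum I) ->
  rf (fun d => Tord (if c then e else ebar) (alphad a b d) s).
Proof.
move=> hI hs.
apply: (rf_prod_fin _ (fun (k : 'I_(size s)) d =>
   nth 0 (map (alphad a b d) s) k / gap (if c then e else ebar) (alphad a b d) (prefset s k.+1))).
move=> k.
have [hsub hmem] := pref_facts _ _ _ hs (ltn_ord k).
apply: (rf_ext (fun d => alphad a b d (nth x0 s k) *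
   (gap (if (prefset s k.+1, c).2 then e else ebar) (alphad a b d) (prefset s k.+1, c).1)^-1)).
  by move=> d _; rewrite (nth_map x0) // ltn_ord.
apply: rf_mul; first exact: rf_alpha.
apply: rf_invgap; exact: (indep_sub _ _ _ _ hI hsub hmem).
Qed.

Lemma rf_Eord c (I : {set 'I_n}) s : indep (if c then e else ebar) I -> s \in permutations (enum I) ->
  rf (fun d => Eord (if c then e else ebar) (alphad a b d) s).
Proof.
move=> hI hs.
apply: rf_mul; last exact: rf_Tord _ _ _ hI hs.
apply: (rf_sum_fin _ (fun _ => true) (fun (l : 'I_(size s)) d =>
   wt (alphad a b d) (nbr (if c then e else ebar) (prefset s l.+1)) /
   gap (if c then e else ebar) (alphad a b d) (prefset s l.+1))).
  have : (0 < size s)%N.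
    move: hs; rewrite mem_permutations => /perm_size ->.
    move: hI => /andP [/set0Pn [x xI] _]; rewrite -cardE; apply/card_gt0P; by exists x.
  by move=> h; exists (Ordinal h).
move=> l _.
have [hsub hmem] := pref_facts _ _ _ hs (ltn_ord l).
apply: rf_mul; first by apply: rf_wt; exact: nbr_ne _ _ _ hmem.
apply: (rf_invgap (prefset s l.+1, c)); exact: (indep_sub _ _ _ _ hI hsub hmem).
Qed.

Lemma perm_ne (I : {set 'I_n}) : permutations (enum I) != [::].
Proof.
apply/eqP => E; have : enum I \in permutations (enum I) by rewrite mem_permutations perm_refl.
by rewrite E.
Qed.

Lemma rf_Tset c (I : {set 'I_n}) : indep (if c then e else ebar) I ->
  rf (fun d => Tset (if c then e else ebar) (alphad a b d) I).
Proof.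
move=> hI; apply: rf_sum; first exact: perm_ne.
by move=> s hs; apply: rf_Tord _ _ _ hI hs.
Qed.

Lemma rf_Eset c (I : {set 'I_n}) : indep (if c then e else ebar) I ->
  rf (fun d => Eset (if c then e else ebar) (alphad a b d) I).
Proof.
move=> hI; apply: rf_sum; first exact: perm_ne.
by move=> s hs; apply: rf_Eord _ _ _ hI hs.
Qed.

End Rf.

Section Aux.
Variables (R : realType) (n : nat).

Lemma sum_alphaP (a b : 'I_n -> R) (K : {set 'I_n}) :
  \sum_(i in K) alphaP a b i = (wt a K)%:P + (wt b K)%:P * 'X.
Proof.
by rewrite /alphaP /wt big_split /= -mulr_suml !rmorph_sum.
Qed.

Lemma gapP_form (e' : rel 'I_n) (a b : 'I_n -> R) I :
  gapP e' a b I = (wt a (nbr e' I) - wt a I)%:P + (wt b (nbr e' I) - wt b I)%:P * 'X.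
Proof.
rewrite /gapP !sum_alphaP !polyCB mulrBl.
set A := (wt a _)%:P; set B := (wt a _)%:P; set C := (wt b _)%:P; set D := (wt b _)%:P.
ring.
Qed.

Lemma lim_lemma (dbar c0 c1 : R) : 0 < dbar ->
  (forall d, 0 < d <= dbar -> 0 < c0 + c1 * d) -> 0 <= c0.
Proof.
move=> hdb H; rewrite leNgt; apply/negP => hc0.
have h1 := H dbar; rewrite hdb lexx /= in h1; have {}h1 := h1 isT.
have c1p : 0 < c1.
  have : 0 < c1 * dbar by lra.
  by rewrite pmulr_lgt0.
pose d := - c0 / (2 * c1).
have c1d : c1 * d = - c0 / 2 by rewrite /d; field; rewrite gt_eqF.
have dp : 0 < d by rewrite /d divr_gt0 // ?oppr_gt0 // mulr_gt0.
have dle : d <= dbar.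
  have : c1 * d <= c1 * dbar by rewrite c1d; lra.
  by rewrite ler_pM2l.
have := H d; rewrite dp dle /= => /(_ isT); rewrite c1d; lra.
Qed.

Lemma wt_mono (alpha : 'I_n -> R) (A B : {set 'I_n}) :
  (forall i, 0 <= alpha i) -> A \subset B -> wt alpha A <= wt alpha B.
Proof.
move=> hp /subsetP sAB; rewrite /wt (bigID (fun i => i \in A) (fun i => i \in B)) /=.
have -> : \sum_(i in B | i \in A) alpha i = \sum_(i in A) alpha i.
  by apply: eq_bigl => i; case iA: (i \in A); rewrite ?andbT ?andbF // sAB.
by rewrite lerDl sumr_ge0.
Qed.

Lemma indep1 (e' : rel 'I_n) x : ~~ e' x x -> indep e' [set x].
Proof.
move=> h; apply/andP; split; first by apply/set0Pn; exists x; rewrite set11.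
apply/forall_inP => i /set1P ->; apply/forall_inP => j /set1P -> //.
Qed.

End Aux.

Theorem mainTheorem6 (R : realType) (n : nat) (e : rel 'I_n)
  (istar jstar : 'I_n) (a b : 'I_n -> R) (dbar : R) :
  (* G finite connected simple graph *)
  symmetric e -> irreflexive e -> (forall i j, connect e i j) ->
  (* i*, j* distinct and non-adjacent *)
  istar != jstar -> ~~ e istar jstar ->
  (* saturation assumption *)
  (forall i, 0 < a i) ->
  0 < dbar ->
  (forall d, 0 < d <= dbar ->
     [/\ (forall i, 0 <= alphad a b d i),
         \sum_i alphad a b d i = 1 &
         (forall I, indep e I -> wt (alphad a b d) I < wt (alphad a b d) (nbr e I))]) ->
  (exists Ih, [/\ indep e Ih, wt a (nbr e Ih) - wt a Ih = 0 &
     forall I, indep e I -> wt a (nbr e I) - wt a I = 0 -> I = Ih]) ->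
  let ebar := addedge e istar jstar in
  let star (I : {set 'I_n}) := (istar \in I) || (jstar \in I) in
  [/\ ratform e ebar a b dbar
        (fun d => \sum_(I | indep ebar I && star I) Eset ebar (alphad a b d) I),
      ratform e ebar a b dbar
        (fun d => 1 + \sum_(I | indep e I) Tset e (alphad a b d) I),
      ratform e ebar a b dbar
        (fun d => \sum_(I | indep e I && star I) Eset e (alphad a b d) I),
      ratform e ebar a b dbar
        (fun d => 1 + \sum_(I | indep ebar I) Tset ebar (alphad a b d) I) &
      ratform e ebar a b dbar
        (fun d => \sum_(I | indep e I && ~~ star I) Eset e (alphad a b d) I)].
Proof.
move=> hsym hirr hconn hne hnadj Ha hdb Hst _ ebar star.
have Hsub : forall i j, e i j -> ebar i j by move=> i j h; rewrite /ebar /addedge h.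
have Hfirst : forall x y, x != y -> connect e x y -> exists z, e x z.
  move=> x y hxy /connectP [p hp hy]; case: p hp hy => [|z p] /=.
    by move=> _ hy; rewrite hy eqxx in hxy.
  by move=> /andP [hz _] _; exists z.
have Hnb : forall x, exists y, e x y.
  move=> x; case hx: (x == istar).
    by apply: (Hfirst x jstar); [rewrite (eqP hx) | apply: hconn].
  by apply: (Hfirst x istar); [rewrite hx | apply: hconn].
have ebirr : forall x, ~~ ebar x x.
  move=> x; rewrite /ebar /addedge hirr /=.
  case: (x =P istar) => [->|_] /=; first by rewrite (negbTE hne).
  by rewrite andbF.
have Hok : forall p, indep (if p.2 then e else ebar) p.1 -> @okp R dbar (@gpp R n e ebar a b p).
  move=> [I c] /= hI; rewrite /gpp /= gapP_form.
  set c0 := (wt a _ - wt a _); set c1 := (wt b _ - wt b _).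
  have pos : forall d, 0 < d <= dbar -> 0 < (c0%:P + c1%:P * 'X).[d].
    move=> d hd; rewrite -gapP_form gapP_eval /gap.
    have [hal _ hgap] := Hst d hd.
    case: c hI {c0 c1} => hI; first by rewrite subr_gt0; apply: hgap.
    have hIe : indep e I.
      move: hI => /andP [h1 /forall_inP h2]; apply/andP; split => //.
      apply/forall_inP => i iI; apply/forall_inP => j jI.
      move/forall_inP: (h2 i iI) => /(_ j jI); apply: contra; exact: Hsub.
    have := hgap I hIe.
    have : wt (alphad a b d) (nbr e I) <= wt (alphad a b d) (nbr ebar I).
      apply: wt_mono => //; apply/subsetP => j; rewrite !inE => /existsP [i /andP [iI hij]].
      by apply/existsP; exists i; rewrite iI Hsub.
    lra.
  exists c0, c1; split => //; split => //.
  apply: (@lim_lemma R dbar c0 c1 hdb) => d hd.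
  by have := pos d hd; rewrite !(hornerD, hornerCM, hornerX, hornerC).
have [z hz] := Hfirst istar jstar hne (hconn _ _).
have zi : z != istar by apply/eqP => zi; rewrite zi hirr in hz.
have zj : z != jstar by apply/eqP => zj; rewrite -zj hz in hnadj.
have I1e : indep e [set istar] by apply: indep1; rewrite hirr.
have I1b : indep ebar [set istar] by apply: indep1; apply: ebirr.
have st1 : star [set istar] by rewrite /star set11.
have Ize : indep e [set z] by apply: indep1; rewrite hirr.
have stz : ~~ star [set z] by rewrite /star !inE !(eq_sym _ z) (negbTE zi) (negbTE zj).
have ex1 : exists I, indep ebar I && star I by exists [set istar]; rewrite I1b st1.
have ex2 : exists I, indep e I by exists [set istar].
have ex3 : exists I, indep e I && star I by exists [set istar]; rewrite I1e st1.
have ex4 : exists I, indep ebar I by exists [set istar].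
have ex5 : exists I, indep e I && ~~ star I by exists [set z]; rewrite Ize stz.
have one := @rf_const R n e ebar a b dbar 1 ltr01.
split.
- have H := @rf_sum_fin R n e ebar a b dbar hdb Hok _ (fun I => indep ebar I && star I)
     (fun I d => Eset ebar (alphad a b d) I) ex1
     (fun I hI => @rf_Eset R n e ebar a b dbar hdb Hok Hsub Hnb Ha istar false I (proj1 (andP hI))).
  eapply rf_ext; [|exact: H]; by move=> ? _.
- have H := @rf_sum_fin R n e ebar a b dbar hdb Hok _ (fun I => indep e I)
     (fun I d => Tset e (alphad a b d) I) ex2
     (fun I hI => @rf_Tset R n e ebar a b dbar hdb Hok Ha istar true I hI).
  have H2 := @rf_add R n e ebar a b dbar hdb Hok _ _ one H.
  eapply rf_ext; [|exact: H2]; by move=> ? _.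
- have H := @rf_sum_fin R n e ebar a b dbar hdb Hok _ (fun I => indep e I && star I)
     (fun I d => Eset e (alphad a b d) I) ex3
     (fun I hI => @rf_Eset R n e ebar a b dbar hdb Hok Hsub Hnb Ha istar true I (proj1 (andP hI))).
  eapply rf_ext; [|exact: H]; by move=> ? _.
- have H := @rf_sum_fin R n e ebar a b dbar hdb Hok _ (fun I => indep ebar I)
     (fun I d => Tset ebar (alphad a b d) I) ex4
     (fun I hI => @rf_Tset R n e ebar a b dbar hdb Hok Ha istar false I hI).
  have H2 := @rf_add R n e ebar a b dbar hdb Hok _ _ one H.
  eapply rf_ext; [|exact: H2]; by move=> ? _.
- have H := @rf_sum_fin R n e ebar a b dbar hdb Hok _ (fun I => indep e I && ~~ star I)
     (fun I d => Eset e (alphad a b d) I) ex5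
     (fun I hI => @rf_Eset R n e ebar a b dbar hdb Hok Hsub Hnb Ha istar true I (proj1 (andP hI))).
  eapply rf_ext; [|exact: H]; by move=> ? _.
Qed.
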